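(* Let $\sigma>0,\lambda>0,\rho>0$ satisfy $\rho^{-2}\sigma<1$ and $\rho\le\lambda-2\rho^{-1}\sigma(1-\rho^{-2}\sigma)^{-1}$. Let $\Omega=\begin{bmatrix}\Omega^{11}&\Omega^{12}\\\Omega^{21}&\Omega^{22}\end{bmatrix}\in\mathbb{R}^{2n\times2n}$ be symmetric (so $(\Omega^{12})^T=\Omega^{21}$) with $\Omega^{11}+\Omega^{22}>0$, and suppose $$\Omega^{12}\Omega^{21}\le\sigma I,\quad\Omega^{21}\Omega^{12}\le\sigma I,\quad\Omega^{11}+\Omega^{22}\ge\lambda I.$$ Define $\Omega_1=\Omega$ and $\Omega_{k+1}=\Omega_k\circledast\Omega_k$. Then $\Omega^{11}_k+\Omega^{22}_k\ge\rho I$ for all $k\in\mathbb{Z}_{>0}$, and there is a block diagonal matrix $\Omega_\infty=\operatorname{diag}(\Omega^{11}_\infty,\Omega^{22}_\infty)$ with $\Omega^{11}_\infty+\Omega^{22}_\infty\ge\rho I$ such that $\Omega_k\to\Omega_\infty$ as $k\to\infty$.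
   Context: For symmetric $\Omega_1,\Omega_2\in\mathbb{R}^{2n\times2n}$ partitioned into $n\times n$ blocks $\Omega_j^{ab}$, with $\Omega_1^{22}+\Omega_2^{11}>0$, define $$\Omega_1\circledast\Omega_2=\begin{bmatrix}\Omega_1^{11}&0\\0&\Omega_2^{22}\end{bmatrix}-\begin{bmatrix}\Omega_1^{12}\\\Omega_2^{21}\end{bmatrix}(\Omega_1^{22}+\Omega_2^{11})^{-1}\begin{bmatrix}\Omega_1^{21}&\Omega_2^{12}\end{bmatrix}.$$ Matrix inequalities are in the positive semidefinite order. *)

(* Defs.v *)
From HB Require Import structures.
From mathcomp Require Import all_boot all_order all_algebra.
From mathcomp Require Import all_classical all_reals all_analysis.
Set Implicit Arguments. Unset Strict Implicit. Unset Printing Implicit Defensive.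
Import Order.TTheory GRing.Theory Num.Theory.
Local Open Scope ring_scope.

Definition psd (R : realType) (m : nat) (A : 'M[R]_m) : Prop :=
  forall x : 'cV[R]_m, 0 <= (x^T *m A *m x) 0 0.

Definition pd (R : realType) (m : nat) (A : 'M[R]_m) : Prop :=
  forall x : 'cV[R]_m, x != 0 -> 0 < (x^T *m A *m x) 0 0.

Definition lemx (R : realType) (m : nat) (A B : 'M[R]_m) : Prop := psd (B - A).

(* The operation Omega1 circledast Omega2 on 2n x 2n matrices split into n x n blocks
   (Omega^{11} = ulsubmx, Omega^{12} = ursubmx, Omega^{21} = dlsubmx,
    Omega^{22} = drsubmx). *)
Definition oast (R : realType) (n : nat) (O1 O2 : 'M[R]_(n + n)) : 'M[R]_(n + n) :=
  block_mx (ulsubmx O1) 0 0 (drsubmx O2)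
  - col_mx (ursubmx O1) (dlsubmx O2) *m invmx (drsubmx O1 + ulsubmx O2)
      *m row_mx (dlsubmx O1) (ursubmx O2).

(* omseq O k = Omega_{k+1}, where Omega_1 = O and Omega_{k+1} = Omega_k circledast Omega_k. *)
Fixpoint omseq (R : realType) (n : nat) (O : 'M[R]_(n + n)) (k : nat) : 'M[R]_(n + n) :=
  match k with
  | 0 => O
  | k'.+1 => let P := omseq O k' in oast P P
  end.

(* Main.v *)
Set Warnings "-notation-overridden,-ambiguous-paths,-notation-incompatible-prefix,-redundant-canonical-projection".
Require Import Defs.
From HB Require Import structures.
From mathcomp Require Import all_boot all_order all_algebra.
From mathcomp Require Import all_classical all_reals all_analysis.
From mathcomp Require Import ring lra zify.
Import Order.TTheory GRing.Theory Num.Theory.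
Import numFieldNormedType.Exports.
Local Open Scope classical_set_scope.
Local Open Scope ring_scope.



Section Dot.
Local Set Implicit Arguments.
Local Unset Strict Implicit.
Variable R : realType.
Variable m : nat.
Implicit Types u v w x y z : 'cV[R]_m.

Definition dot u v : R := (u^T *m v) 0 0.
Local Notation nrm u := (dot u u).

Lemma dotE u v : dot u v = \sum_i u i 0 * v i 0.
Proof. by rewrite /dot mxE; apply: eq_bigr => i _; rewrite mxE. Qed.

Lemma dotC u v : dot u v = dot v u.
Proof. by rewrite !dotE; apply: eq_bigr => i _; rewrite mulrC. Qed.

Lemma dotDl u v w : dot (u + v) w = dot u w + dot v w.
Proof. by rewrite !dotE -big_split; apply: eq_bigr => i _; rewrite mxE mulrDl. Qed.

Lemma dotDr u v w : dot u (v + w) = dot u v + dot u w.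
Proof. by rewrite dotC dotDl !(dotC u). Qed.

Lemma dotNl u v : dot (- u) v = - dot u v.
Proof. by rewrite !dotE -sumrN; apply: eq_bigr => i _; rewrite mxE mulNr. Qed.

Lemma dotNr u v : dot u (- v) = - dot u v.
Proof. by rewrite dotC dotNl dotC. Qed.

Lemma dotBr u v w : dot u (v - w) = dot u v - dot u w.
Proof. by rewrite dotDr dotNr. Qed.

Lemma dotZl a u v : dot (a *: u) v = a * dot u v.
Proof. by rewrite !dotE mulr_sumr; apply: eq_bigr => i _; rewrite mxE mulrA. Qed.

Lemma dotZr a u v : dot u (a *: v) = a * dot u v.
Proof. by rewrite dotC dotZl dotC. Qed.

Lemma dot_ge0 u : 0 <= nrm u.
Proof. by rewrite dotE; apply: sumr_ge0 => i _; rewrite -expr2 sqr_ge0. Qed.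

Lemma dot_eq0 u : nrm u = 0 -> u = 0.
Proof.
rewrite dotE => /psumr_eq0P H; apply/matrixP => i j; rewrite (ord1 j) mxE.
have /eqP := H (fun k _ => ltac:(by rewrite -expr2 sqr_ge0)) i isT.
by rewrite mulf_eq0 orbb => /eqP.
Qed.

Lemma dot_mulmx u (M : 'M[R]_m) v : dot u (M *m v) = dot (M^T *m u) v.
Proof. by rewrite /dot trmx_mul trmxK mulmxA. Qed.

Lemma nrmN u : nrm (- u) = nrm u.
Proof. by rewrite dotNl dotNr opprK. Qed.

Lemma nrm_subZ u v k : nrm (u - k *: v) = nrm u - 2 * k * dot u v + k ^+ 2 * nrm v.
Proof.
rewrite dotDl !dotDr !dotNl !dotNr !dotZl !dotZr (dotC v u); ring.
Qed.

Lemma nrmD u v : nrm (u + v) = nrm u + 2 * dot u v + nrm v.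
Proof. rewrite dotDl !dotDr (dotC v u); ring. Qed.

Lemma nrmB u v : nrm (u - v) = nrm u - 2 * dot u v + nrm v.
Proof. rewrite dotDl !dotDr !dotNl !dotNr (dotC v u); ring. Qed.

Lemma psd_dot {A : 'M[R]_m} x : psd A -> 0 <= dot x (A *m x).
Proof. by move=> /(_ x); rewrite /dot mulmxA. Qed.

Lemma lemx_dot (A B : 'M[R]_m) x : lemx A B -> dot x (A *m x) <= dot x (B *m x).
Proof.
by move=> H; have := psd_dot x H; rewrite mulmxBl dotBr subr_ge0.
Qed.

Lemma dot_lemx (A B : 'M[R]_m) : (forall x, dot x (A *m x) <= dot x (B *m x)) -> lemx A B.
Proof.
move=> H x; have := H x; rewrite -subr_ge0 -dotBr -mulmxBl.
by rewrite /dot mulmxA.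
Qed.

Lemma dot_scalar c x : dot x (c%:M *m x) = c * nrm x.
Proof. by rewrite mul_scalar_mx dotZr. Qed.

Lemma entry_dot (M : 'M[R]_m) i j : M i j = dot (delta_mx i 0) (M *m delta_mx j 0).
Proof. by rewrite /dot trmx_delta mulmxA -rowE -colE !mxE. Qed.

Lemma nrm_delta i : nrm (delta_mx i 0 : 'cV[R]_m) = 1.
Proof.
rewrite dotE (bigD1 i) //= big1 ?addr0 => [|k kn]; first by rewrite !mxE eqxx mulr1.
by rewrite !mxE (negbTE kn) mul0r.
Qed.

Lemma entry_sqr_le (M : 'M[R]_m) i j : (M i j) ^+ 2 <= nrm (M *m delta_mx j 0).
Proof.
rewrite -colE dotE (bigD1 i) //= !mxE -expr2 lerDl.
by apply: sumr_ge0 => k _; rewrite -expr2 sqr_ge0.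
Qed.

Section Inv.
Variables (S : 'M[R]_m) (l : R).
Hypotheses (hl : 0 < l) (hS : S^T = S) (hb : forall x, l * nrm x <= dot x (S *m x)).

Lemma S_unit : S \in unitmx.
Proof.
rewrite unitmxE unitfE; apply/negP => /det0P [v vn0 vS].
have h0 : dot v^T (S *m v^T) = 0.
  by rewrite /dot trmxK mulmxA vS mul0mx mxE.
have := hb v^T; rewrite h0 => h1.
have h2 : nrm v^T = 0.
  apply/eqP; rewrite eq_le dot_ge0 andbT.
  by rewrite -(pmulr_rle0 _ hl).
move/dot_eq0: h2 => /(congr1 trmx); rewrite trmxK trmx0 => v0.
by rewrite v0 eqxx in vn0.
Qed.

Lemma key y : l * dot y (S *m y) <= nrm (S *m y).
Proof.
have h1 := dot_ge0 (S *m y - l *: y).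
rewrite nrm_subZ (dotC (S *m y) y) in h1.
have h2 := hb y.
have h4 : 0 <= l * (dot y (S *m y) - l * nrm y) by apply: mulr_ge0; [exact: ltW | rewrite subr_ge0].
rewrite expr2 in h1.
nra.
Qed.

Let W := invmx S.

Lemma W_sym : W^T = W.
Proof. by rewrite /W trmx_inv hS. Qed.

Lemma W_bounds z : 0 <= dot z (W *m z) /\ l * dot z (W *m z) <= nrm z.
Proof.
set y := W *m z.
have ez : z = S *m y by rewrite /y /W mulKVmx // S_unit.
have -> : dot z y = dot y (S *m y) by rewrite {1}ez dotC.
split; last by apply: (le_trans (key y)); rewrite -ez.
apply: le_trans (hb y); apply: mulr_ge0; [exact: ltW | exact: dot_ge0].
Qed.

Lemma W_nrm z : l ^+ 2 * nrm (W *m z) <= nrm z.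
Proof.
set y := W *m z.
have ez : z = S *m y by rewrite /y /W mulKVmx // S_unit.
rewrite ez; apply: le_trans (key y).
rewrite expr2 -mulrA ler_pM2l //; exact: hb.
Qed.

Lemma W_polar u v : - (nrm u + nrm v) <= l * dot u (W *m v) <= nrm u + nrm v.
Proof.
have [p0 p1] := W_bounds (u + v).
have [m0 m1] := W_bounds (u - v).
have e1 : dot (u + v) (W *m (u + v)) = dot u (W *m u) + 2 * dot u (W *m v) + dot v (W *m v).
  rewrite mulmxDr dotDl !dotDr (dot_mulmx v W u) W_sym (dotC (W *m v) u); ring.
have e2 : dot (u - v) (W *m (u - v)) = dot u (W *m u) - 2 * dot u (W *m v) + dot v (W *m v).
  rewrite mulmxBr dotDl !dotBr !dotNl (dot_mulmx v W u) W_sym (dotC (W *m v) u); ring.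
rewrite e1 nrmD in p1; rewrite e2 nrmB in m1; rewrite e1 in p0; rewrite e2 in m0.
have q1 := dot_ge0 (u + v); have q2 := dot_ge0 (u - v).
rewrite nrmD in q1; rewrite nrmB in q2.
have lp := mulr_ge0 (ltW hl) p0; have lm := mulr_ge0 (ltW hl) m0.
apply/andP; split; nra.
Qed.

End Inv.
End Dot.
Arguments dot {R m}.



Section Blocks.
Local Set Implicit Arguments.
Local Unset Strict Implicit.
Variable R : realType.
Variable n : nat.
Implicit Types P : 'M[R]_(n + n).
Local Notation nrm u := (dot u u).

Definition Wm P := invmx (drsubmx P + ulsubmx P).

Lemma oast_E P : oast P P =
  block_mx (ulsubmx P - ursubmx P *m Wm P *m dlsubmx P)
           (- (ursubmx P *m Wm P *m ursubmx P))
           (- (dlsubmx P *m Wm P *m dlsubmx P))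
           (drsubmx P - dlsubmx P *m Wm P *m ursubmx P).
Proof. by rewrite /oast mul_col_mx mul_col_row opp_block_mx add_block_mx !add0r. Qed.

Lemma oast_ul P : ulsubmx (oast P P) = ulsubmx P - ursubmx P *m Wm P *m dlsubmx P.
Proof. by rewrite oast_E block_mxKul. Qed.
Lemma oast_ur P : ursubmx (oast P P) = - (ursubmx P *m Wm P *m ursubmx P).
Proof. by rewrite oast_E block_mxKur. Qed.
Lemma oast_dl P : dlsubmx (oast P P) = - (dlsubmx P *m Wm P *m dlsubmx P).
Proof. by rewrite oast_E block_mxKdl. Qed.
Lemma oast_dr P : drsubmx (oast P P) = drsubmx P - dlsubmx P *m Wm P *m ursubmx P.
Proof. by rewrite oast_E block_mxKdr. Qed.

Lemma sym_facts P : P^T = P ->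
  [/\ (ulsubmx P)^T = ulsubmx P, (drsubmx P)^T = drsubmx P,
      (ursubmx P)^T = dlsubmx P & (dlsubmx P)^T = ursubmx P].
Proof.
by move=> hP; rewrite trmx_ulsub trmx_drsub trmx_ursub trmx_dlsub hP.
Qed.

Lemma Wm_sym P : P^T = P -> (Wm P)^T = Wm P.
Proof.
move=> hP; have [hA hD _ _] := sym_facts hP.
by rewrite /Wm trmx_inv linearD /= hA hD.
Qed.

Lemma oast_sym P : P^T = P -> (oast P P)^T = oast P P.
Proof.
move=> hP; have [hA hD hB hC] := sym_facts hP; have hW := Wm_sym hP.
rewrite oast_E tr_block_mx !linearB /= !linearN /= !trmx_mul hA hD hB hC hW.
by rewrite !mulmxA.
Qed.

Definition InvOm P (l s : R) :=
  [/\ P^T = P,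
      forall x, l * nrm x <= dot x ((ulsubmx P + drsubmx P) *m x),
      forall x, nrm (ursubmx P *m x) <= s * nrm x &
      forall x, nrm (dlsubmx P *m x) <= s * nrm x].

Lemma step_aux (Bm S : 'M[R]_n) (rho l s s' : R) : 0 < rho -> rho <= l -> 0 <= s ->
  s ^+ 2 <= rho ^+ 2 * s' ->
  (forall x, l * nrm x <= dot x (S *m x)) ->
  (forall x, nrm (Bm *m x) <= s * nrm x) ->
  forall x, nrm (Bm *m (invmx S *m (Bm *m x))) <= s' * nrm x.
Proof.
move=> hr hrl hs hs' hb hB x.
have hl : 0 < l := lt_le_trans hr hrl.
have hN := hB (invmx S *m (Bm *m x)).
have hM := W_nrm hl hb (Bm *m x).
have hc := hB x.
have N0 := dot_ge0 (Bm *m (invmx S *m (Bm *m x))).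
have M0 := dot_ge0 (invmx S *m (Bm *m x)).
have ha := dot_ge0 x.
move: hN hM hc N0 M0 ha.
set N := nrm (Bm *m _); set M := nrm (invmx S *m _); set c := nrm (Bm *m x); set a := nrm x.
move=> hN hM hc N0 M0 ha.
have hrl2 : rho ^+ 2 <= l ^+ 2 by rewrite lerXn2r // ?nnegrE ltW.
have k1 := ler_wpM2r N0 hrl2.
have k2 := ler_wpM2l (sqr_ge0 l) hN.
have k4 := ler_wpM2l hs hM.
have k5 := ler_wpM2l hs hc.
have k6 := ler_wpM2r ha hs'.
rewrite -(ler_pM2l (exprn_gt0 2 hr)).
rewrite !expr2 in k1 k2 k4 k6 *.
nra.
Qed.

Lemma Inv_step P (rho l s l' s' : R) : 0 < rho -> rho <= l -> 0 <= s ->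
  rho * l' <= rho * l - 2 * s -> s ^+ 2 <= rho ^+ 2 * s' ->
  InvOm P l s -> InvOm (oast P P) l' s'.
Proof.
move=> hr hrl hs hl' hs' [hP hb hB hC].
have [hA hD hBt hCt] := sym_facts hP.
have hl : 0 < l := lt_le_trans hr hrl.
have hSt : (ulsubmx P + drsubmx P)^T = ulsubmx P + drsubmx P.
  by rewrite linearD /= hA hD.
have hWe : Wm P = invmx (ulsubmx P + drsubmx P) by rewrite /Wm addrC.
split.
- exact: oast_sym.
- move=> x; rewrite oast_ul oast_dr addrACA -opprD mulmxBl (mulmxDl (ursubmx P *m Wm P *m dlsubmx P)) dotBr dotDr.
  have e1 : dot x (ursubmx P *m Wm P *m dlsubmx P *m x) =
            dot (dlsubmx P *m x) (Wm P *m (dlsubmx P *m x)).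
    by rewrite -!mulmxA dot_mulmx hBt.
  have e2 : dot x (dlsubmx P *m Wm P *m ursubmx P *m x) =
            dot (ursubmx P *m x) (Wm P *m (ursubmx P *m x)).
    by rewrite -!mulmxA dot_mulmx hCt.
  rewrite e1 e2 hWe.
  have [t10 t11] := W_bounds hl hb (dlsubmx P *m x).
  have [t20 t21] := W_bounds hl hb (ursubmx P *m x).
  have := hB x; have := hC x; have := hb x; have := dot_ge0 x.
  set a := nrm x; set t1 := dot (dlsubmx P *m x) (invmx _ *m _); set t2 := dot (ursubmx P *m x) (invmx _ *m _).
  set dS := dot x _; set c1 := nrm (dlsubmx P *m x); set c2 := nrm (ursubmx P *m x).
  move=> ha hdS hc1 hc2.
  have h1 : rho * t1 <= s * a.
    exact: le_trans (ler_wpM2r t10 hrl) (le_trans t11 hc1).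
  have h2 : rho * t2 <= s * a.
    exact: le_trans (ler_wpM2r t20 hrl) (le_trans t21 hc2).
  have k1 := ler_wpM2r ha hl'.
  have k2 : rho * (l * a) <= rho * dS by rewrite ler_pM2l.
  rewrite -(ler_pM2l hr).
  nra.
- move=> x; rewrite oast_ur mulNmx nrmN -!mulmxA hWe.
  exact: step_aux hr hrl hs hs' hb hB x.
- move=> x; rewrite oast_dl mulNmx nrmN -!mulmxA hWe.
  exact: step_aux hr hrl hs hs' hb hC x.
Qed.

End Blocks.



Section Entries.
Local Set Implicit Arguments.
Local Unset Strict Implicit.
Variable R : realType.
Variable n : nat.
Implicit Types P : 'M[R]_(n + n).
Local Notation nrm u := (dot u u).

Lemma oppmxE m k (M : 'M[R]_(m, k)) i j : (- M) i j = - M i j.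
Proof. by rewrite mxE. Qed.
Lemma submxE m k (M N : 'M[R]_(m, k)) i j : (M - N) i j = M i j - N i j.
Proof. by rewrite !mxE. Qed.

Lemma block_bound (M : 'M[R]_(n + n)) c :
  (forall i j, `|M (lshift n i) (lshift n j)| <= c) ->
  (forall i j, `|M (lshift n i) (rshift n j)| <= c) ->
  (forall i j, `|M (rshift n i) (lshift n j)| <= c) ->
  (forall i j, `|M (rshift n i) (rshift n j)| <= c) ->
  forall i j, `|M i j| <= c.
Proof.
move=> h1 h2 h3 h4 i j.
by case: (split_ordP i) => i' ->; case: (split_ordP j) => j' ->.
Qed.

Lemma prod_entry (X Y S : 'M[R]_n) l s i j : 0 < l -> S^T = S ->
  (forall x, l * nrm x <= dot x (S *m x)) ->
  nrm (X^T *m delta_mx i 0) <= s -> nrm (Y *m delta_mx j 0) <= s ->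
  l * `|(X *m invmx S *m Y) i j| <= 2 * s.
Proof.
move=> hl hS hb h1 h2.
rewrite entry_dot -!mulmxA dot_mulmx.
have := W_polar hl hS hb (X^T *m delta_mx i 0) (Y *m delta_mx j 0).
set z := dot _ (invmx S *m _) => /andP[z1 z2].
have [z0|z0] := lerP 0 z; [rewrite ger0_norm // | rewrite ltr0_norm //]; lra.
Qed.

Lemma abs_le_sqr (x t : R) : 0 <= t -> x ^+ 2 <= t ^+ 2 -> `|x| <= t.
Proof.
move=> ht; rewrite !expr2 => h.
have [x0|x0] := lerP 0 x; [rewrite ger0_norm // | rewrite ltr0_norm //]; nra.
Qed.

Lemma entry_B (Bm : 'M[R]_n) s t i j : 0 <= t -> s <= t ^+ 2 ->
  (forall x, nrm (Bm *m x) <= s * nrm x) -> `|Bm i j| <= t.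
Proof.
move=> ht hst hB; apply: abs_le_sqr => //.
apply: le_trans (entry_sqr_le Bm i j) _; apply: le_trans (hB _) _.
by rewrite nrm_delta mulr1.
Qed.

Lemma d_bound P (rho l s t : R) : 0 < rho -> rho <= l -> 0 <= s -> 0 <= t ->
  s <= t ^+ 2 -> InvOm P l s ->
  forall i j, rho * `|(oast P P - P) i j| <= 2 * s + rho * t.
Proof.
move=> hr hrl hs ht hst [hP hb hB hC].
have [hA hD hBt hCt] := sym_facts hP.
have hl : 0 < l := lt_le_trans hr hrl.
have hSt : (ulsubmx P + drsubmx P)^T = ulsubmx P + drsubmx P.
  by rewrite linearD /= hA hD.
have hWe : Wm P = invmx (ulsubmx P + drsubmx P) by rewrite /Wm addrC.
have nB : forall i, nrm (ursubmx P *m delta_mx i 0) <= s.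
  by move=> i; apply: le_trans (hB _) _; rewrite nrm_delta mulr1.
have nC : forall i, nrm (dlsubmx P *m delta_mx i 0) <= s.
  by move=> i; apply: le_trans (hC _) _; rewrite nrm_delta mulr1.
have pe : forall (X Y : 'M[R]_n) i j,
    nrm (X^T *m delta_mx i 0) <= s -> nrm (Y *m delta_mx j 0) <= s ->
    rho * `|(X *m Wm P *m Y) i j| <= 2 * s.
  move=> X Y i j h1 h2; rewrite hWe.
  apply: le_trans (prod_entry hl hSt hb h1 h2).
  by apply: ler_wpM2r => //; exact: normr_ge0.
have hrt : 0 <= rho * t by apply: mulr_ge0 => //; exact: ltW.
have hBe : forall i j, `|ursubmx P i j| <= t by move=> i j; exact: entry_B ht hst hB.
have hCe : forall i j, `|dlsubmx P i j| <= t by move=> i j; exact: entry_B ht hst hC.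
move=> i j; rewrite -[_ * `|_|]/(rho * `|(oast P P - P) i j|).
suff : `|(oast P P - P) i j| <= rho^-1 * (2 * s + rho * t).
  by rewrite ler_pdivlMl // => ->.
apply: block_bound => {}i {}j.
- have -> : (oast P P - P) (lshift n i) (lshift n j) =
            (ulsubmx (oast P P) - ulsubmx P) i j by rewrite !submxE !mxE.
  rewrite oast_ul addrAC subrr add0r oppmxE normrN ler_pdivlMl //.
  have := pe (ursubmx P) (dlsubmx P) i j (ltac:(by rewrite hBt; exact: nC)) (nC j).
  by move=> h; apply: le_trans h _; rewrite lerDl.
- have -> : (oast P P - P) (lshift n i) (rshift n j) =
            (ursubmx (oast P P) - ursubmx P) i j by rewrite !submxE !mxE.
  rewrite oast_ur submxE oppmxE ler_pdivlMl //.
  have := pe (ursubmx P) (ursubmx P) i j (ltac:(by rewrite hBt; exact: nC)) (nB j).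
  have := hBe i j.
  move=> h1 h2; apply: le_trans (ler_wpM2l (ltW hr) (ler_normB _ _)) _.
  rewrite mulrDr normrN; exact: lerD h2 (ler_wpM2l (ltW hr) h1).
- have -> : (oast P P - P) (rshift n i) (lshift n j) =
            (dlsubmx (oast P P) - dlsubmx P) i j by rewrite !submxE !mxE.
  rewrite oast_dl submxE oppmxE ler_pdivlMl //.
  have := pe (dlsubmx P) (dlsubmx P) i j (ltac:(by rewrite hCt; exact: nB)) (nC j).
  have := hCe i j.
  move=> h1 h2; apply: le_trans (ler_wpM2l (ltW hr) (ler_normB _ _)) _.
  rewrite mulrDr normrN; exact: lerD h2 (ler_wpM2l (ltW hr) h1).
- have -> : (oast P P - P) (rshift n i) (rshift n j) =
            (drsubmx (oast P P) - drsubmx P) i j by rewrite !submxE !mxE.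
  rewrite oast_dr addrAC subrr add0r oppmxE normrN ler_pdivlMl //.
  have := pe (dlsubmx P) (ursubmx P) i j (ltac:(by rewrite hCt; exact: nB)) (nB j).
  by move=> h; apply: le_trans h _; rewrite lerDl.
Qed.

End Entries.



HB.instance Definition _ (R : realType) (m k : nat) := Complete.on 'M[R]_(m,k).

Section Lim.
Variable R : realType.
Variable n : nat.
Local Notation nrm u := (dot u u).

Lemma quad_exp (N : 'M[R]_(n + n)) (x : 'cV[R]_n) :
  dot x ((ulsubmx N + drsubmx N) *m x) =
  \sum_i \sum_j (x i 0 * (N (lshift n i) (lshift n j) + N (rshift n i) (rshift n j)) * x j 0).
Proof.
rewrite dotE; apply: eq_bigr => i _; rewrite mxE mulr_sumr; apply: eq_bigr => j _.
by rewrite !mxE mulrA.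
Qed.

Lemma cvg_quad (u : nat -> 'M[R]_(n + n)) L (x : 'cV[R]_n) :
  u @ \oo --> L ->
  (fun k => dot x ((ulsubmx (u k) + drsubmx (u k)) *m x)) @ \oo -->
  dot x ((ulsubmx L + drsubmx L) *m x).
Proof.
move=> hu.
have hc : forall a b, (fun k => u k a b) @ \oo --> L a b.
  move=> a b.
  have := @continuous_cvg _ _ _ _ _ u (fun M : 'M[R]_(n + n) => M a b) L (@coord_continuous R _ _ a b L) hu.
  exact.
rewrite quad_exp; under eq_cvg do rewrite quad_exp.
apply: cvg_big => //.
  exact: add_continuous.
move=> i _; apply: cvg_big => //; first exact: add_continuous.
move=> j _; apply: cvgMr_tmp; apply: cvgMl_tmp; apply: cvgD; exact: hc.
Qed.

End Lim.

Lemma geo_sum (R : realType) (q : R) k :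
  (1 - q) * \sum_(j < k) q ^+ j.+1 = q - q ^+ k.+1.
Proof.
elim: k => [|k IH]; first by rewrite big_ord0 mulr0 expr1 subrr.
rewrite big_ord_recr /= mulrDr IH (exprS q k.+1); move: (q ^+ k.+1) => t; ring.
Qed.

Theorem theorem4p2 (R : realType) (n : nat) (sigma lambda rho : R)
  (Omega : 'M[R]_(n + n)) :
  0 < sigma -> 0 < lambda -> 0 < rho ->
  rho ^-2 * sigma < 1 ->
  rho <= lambda - 2 * rho^-1 * sigma * (1 - rho ^-2 * sigma)^-1 ->
  Omega^T = Omega ->
  pd (ulsubmx Omega + drsubmx Omega) ->
  lemx (ursubmx Omega *m dlsubmx Omega) (sigma%:M) ->
  lemx (dlsubmx Omega *m ursubmx Omega) (sigma%:M) ->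
  lemx (lambda%:M) (ulsubmx Omega + drsubmx Omega) ->
  (forall k : nat,
     lemx (rho%:M) (ulsubmx (omseq Omega k) + drsubmx (omseq Omega k)))
  /\
  (exists (A B : 'M[R]_n),
     lemx (rho%:M) (A + B) /\
     omseq Omega @ \oo --> block_mx A 0 0 B).
Proof.
move=> hsig hlam hr hq1 hlr hP _ hBC hCB hS.
set q := rho ^-2 * sigma.
have hr0 : rho != 0 by rewrite gt_eqF.
have hq0 : 0 < q by rewrite /q mulr_gt0 // invr_gt0 exprn_gt0.
have h1q : 0 < 1 - q by rewrite subr_gt0.
set l := fun k : nat => lambda - 2 * rho * \sum_(j < k) q ^+ j.+1.
set s := fun k : nat => rho ^+ 2 * q ^+ k.+1.
have hs0 : forall k, 0 <= s k.
  by move=> k; rewrite /s mulr_ge0 // ?sqr_ge0 // exprn_ge0 // ltW.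
have hlk : forall k, rho <= l k.
  move=> k; rewrite /l.
  set X := \sum_(j < k) _.
  set Y := 2 * rho^-1 * sigma * (1 - q)^-1.
  have hY : Y * (1 - q) = 2 * rho * q.
    rewrite /Y /q; field.
    rewrite hr0 /= subr_eq0 gt_eqF //.
    by move: hq1; rewrite /q mulrC ltr_pdivrMr ?exprn_gt0 // mul1r.
  have hX := @geo_sum R q k; rewrite -/X in hX.
  have hqk : 0 <= q ^+ k.+1 by rewrite exprn_ge0 // ltW.
  suff : 2 * rho * X <= Y by move=> h; apply: le_trans hlr _; rewrite lerD2l lerN2.
  rewrite -(ler_pM2r h1q) hY.
  have -> : 2 * rho * X * (1 - q) = 2 * rho * (q - q ^+ k.+1) by rewrite -hX; ring.
  have hp : 0 <= rho * q ^+ k.+1 by rewrite mulr_ge0 // ltW.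
  lra.
have hq1' : q <= 1 by apply: ltW.
have [hA hD hBt hCt] := sym_facts hP.
have hinv : forall k, InvOm (omseq Omega k) (l k) (s k).
  elim=> [|k IH].
  - have -> : l 0%N = lambda by rewrite /l big_ord0 mulr0 subr0.
    have -> : s 0%N = sigma by rewrite /s /q expr1; field.
    split => //.
    + by move=> x; have := lemx_dot x hS; rewrite dot_scalar.
    + by move=> x; have := lemx_dot x hCB; rewrite dot_scalar -mulmxA dot_mulmx hCt.
    + by move=> x; have := lemx_dot x hBC; rewrite dot_scalar -mulmxA dot_mulmx hBt.
  - apply: (Inv_step hr (hlk k) (hs0 k) _ _ IH).
    + rewrite le_eqVlt; apply/orP; left; apply/eqP.
      rewrite /l /s big_ord_recr /=.
      move: (\sum_(j < k) _) (q ^+ k.+1) => a b; ring.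
    + have hqq : q ^+ k.+1 ^+ 2 <= q ^+ k.+2.
        by rewrite -exprM; apply: ler_wiXn2l => //; [exact: ltW | lia].
      rewrite /s exprMn [(rho ^+ 2) ^+ 2]expr2 -mulrA.
      by apply: ler_wpM2l; [exact: sqr_ge0 | apply: ler_wpM2l => //; exact: sqr_ge0].
split.
  move=> k; apply: dot_lemx => x; rewrite dot_scalar.
  have [_ hb _ _] := hinv k; apply: le_trans (hb x).
  by rewrite ler_wpM2r ?dot_ge0 ?hlk.
set r := Num.sqrt q.
have r0 : 0 <= r := sqrtr_ge0 q.
have hr2 : r ^+ 2 = q := sqr_sqrtr (ltW hq0).
have r1 : r < 1.
  have := hq1'; rewrite -hr2 expr2 => h.
  rewrite lt_neqAle; apply/andP; split; last by nra.
  apply/negP => /eqP r1.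
  by move: hq1; rewrite -/q -hr2 r1 expr1n ltxx.
have hr1 : `|r| < 1 by rewrite ger0_norm.
set t := fun k : nat => rho * r ^+ k.+1.
have t0 : forall k, 0 <= t k by move=> k; rewrite /t mulr_ge0 ?exprn_ge0 // ltW.
have hst : forall k, s k <= t k ^+ 2.
  by move=> k; rewrite /s /t /= [X in _ <= X]exprMn -exprM mulnC exprM hr2.
set d := telescope (omseq Omega).
have hd : forall k, d k = oast (omseq Omega k) (omseq Omega k) - omseq Omega k by [].
set g := geometric (3 * rho * r) r.
have g0 : forall k, 0 <= g k.
  by move=> k; rewrite /g /= !mulr_ge0 ?exprn_ge0 // ltW.
have hdg : forall k, `|d k| <= g k.
  move=> k; change (mx_norm (d k) <= g k); rewrite hd mx_normrE.
  apply: bigmax_le => [|ij _]; first exact: g0.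
  have := d_bound hr (hlk k) (hs0 k) (t0 k) (hst k) (hinv k) ij.1 ij.2.
  rewrite /s /t /g /= => hz.
  have -> : 3 * rho * r * r ^+ k = 3 * rho * r ^+ k.+1 by rewrite exprS mulrA.
  rewrite -(ler_pM2l hr).
  rewrite -hr2 -exprM mulnC exprM in hz.
  have := exprn_ge0 k.+1 r0; have := exprn_ile1 k.+1 r0 (ltW r1).
  move: hz; move: (r ^+ k.+1) => a.
  have := normr_ge0 ((oast (omseq Omega k) (omseq Omega k) - omseq Omega k) ij.1 ij.2).
  move: (`|_|) => z z0 hz a1 a0.
  have h3 : rho ^+ 2 * a ^+ 2 <= rho ^+ 2 * a by rewrite ler_wpM2l ?sqr_ge0 // expr2 ler_piMr.
  rewrite !expr2 in hz h3 *; nra.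
have hcs : cvgn (series d).
  apply: normed_cvg.
  apply: (@series_le_cvg R (fun k => `|d k|) g) => //.
  exact: is_cvg_geometric_series.
have hom : omseq Omega = (fun k => Omega + series d k).
  by apply: funext => k; exact: (eq_sum_telescope (omseq Omega) k).
set L := Omega + limn (series d).
have hconv : omseq Omega @ \oo --> L.
  rewrite hom; apply: cvgD; [exact: cvg_cst | exact: hcs].
clearbody L.
have hc : forall a b, (fun k => omseq Omega k a b) @ \oo --> L a b.
  move=> a b.
  have := @continuous_cvg _ _ _ _ _ (omseq Omega) (fun M : 'M[R]_(n + n) => M a b) L (@coord_continuous R _ _ a b L) hconv.
  exact.
have ht0 : t @ \oo --> 0.
  have -> : t = geometric (rho * r) r.
    by apply: funext => k; rewrite /t /= exprS mulrA.
  exact: cvg_geometric.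
have hoff : forall a b, (forall k, `|omseq Omega k a b| <= t k) -> L a b = 0.
  move=> a b hab.
  have h0 : (fun k => omseq Omega k a b) @ \oo --> 0.
    apply: (@squeeze_cvgr _ _ _ _ (fun k => - t k) t).
    - by apply: nearW => k; rewrite -ler_norml.
    - by rewrite -oppr0; apply: cvgN.
    - exact: ht0.
  exact: (cvg_unique (@Rhausdorff R) (hc a b) h0).
have hB : forall k i j, `|omseq Omega k (lshift n i) (rshift n j)| <= t k.
  move=> k i j; have [_ _ hB _] := hinv k.
  by have := entry_B i j (t0 k) (hst k) hB; rewrite !mxE.
have hC : forall k i j, `|omseq Omega k (rshift n i) (lshift n j)| <= t k.
  move=> k i j; have [_ _ _ hC] := hinv k.
  by have := entry_B i j (t0 k) (hst k) hC; rewrite !mxE.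
exists (ulsubmx L), (drsubmx L); split.
- apply: dot_lemx => x; rewrite dot_scalar -subr_ge0.
  have hy := @cvg_quad R n (omseq Omega) L x hconv.
  set f := fun k => dot x ((ulsubmx (omseq Omega k) + drsubmx (omseq Omega k)) *m x) - rho * dot x x.
  have hy' : f @ \oo --> dot x ((ulsubmx L + drsubmx L) *m x) - rho * dot x x.
    by apply: cvgB => //; exact: cvg_cst.
  have hnear : \forall k \near \oo, [set y : R | 0 <= y] (f k).
    apply: nearW => k /=; rewrite /f subr_ge0; have [_ hb _ _] := hinv k.
    apply: le_trans (hb x); by rewrite ler_wpM2r ?dot_ge0 ?hlk.
  have := @closed_cvg _ _ _ _ f _ (@closed_ge R 0) hnear _ hy'. exact.
- have -> : block_mx (ulsubmx L) 0 0 (drsubmx L) = L.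
    rewrite -[RHS]submxK; congr block_mx; apply/matrixP => i j; rewrite !mxE; apply/esym.
    + by apply: hoff => k; exact: hB.
    + by apply: hoff => k; exact: hC.
  exact: hconv.
Qed.
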